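(* Let $C\subseteq\mathbb{F}^n$ be an $[n,k]$ linear code with full support, and let $T=\boldsymbol{\alpha}^1|\mathfrak{s}_1\otimes\cdots\otimes\boldsymbol{\alpha}^k|\mathfrak{s}_k$ be a minimal linear trellis for $C$. Let $\boldsymbol{\beta}^1,\dots,\boldsymbol{\beta}^k\in C$ be such that $\mathfrak{s}_i$ is a minimal span of $\boldsymbol{\beta}^i$ for every $i$. Then $\boldsymbol{\beta}^1,\dots,\boldsymbol{\beta}^k$ is a basis of $C$, and consequently $T'=\boldsymbol{\beta}^1|\mathfrak{s}_1\otimes\cdots\otimes\boldsymbol{\beta}^k|\mathfrak{s}_k$ is also a minimal linear trellis for $C$.
   Context: Let $\mathbb{F}$ be a finite field and $n\ge1$; indices are taken in $\mathbb{Z}_n$. A trellis $T$ of length $n$ over $\mathbb{F}$ consists of pairwise disjoint finite vertex sets $V_i(T)$, $i\in\mathbb{Z}_n$, and edge sets $E_i(T)\subseteq V_i(T)\times\mathbb{F}\times V_{i+1}(T)$. Trellises are trim. $T$ is linear if each $V_i(T)$ is an $\mathbb{F}$-vector space and each $E_i(T)$ a subspace. $C(T)$ is the set of label sequences of closed paths of length $n$ starting in $V_0(T)$. $T'$ is smaller than $T$ if $|V_i(T')|\le|V_i(T)|$ for all $i$ with some strict inequality; a minimal linear trellis for $C$ is a linear trellis $T$ with $C(T)=C$ such that no linear trellis $T'$ with $C(T')=C$ is smaller than $T$. Spans: for $a\in\mathbb{Z}_n$, $0\le l\le n-1$, $[a,a+l]=\{a,\dots,a+l\}\subseteq\mathbb{Z}_n$,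 $(a,a+l]=[a,a+l]\setminus\{a\}$; $(a,l)$ is a span; degenerate spans $\emptyset$ (length $-1$) and $\mathbb{Z}_n$ (length $n$, written $(a,n)$). Partial order: $(a_1,l_1)\le(a_2,l_2)$ iff ($l_1\le l_2<n-1$ and $[a_1,a_1+l_1]\subseteq[a_2,a_2+l_2]$) or ($l_2=n-1$ and $(a_1,a_1+l_1]\subseteq(a_2,a_2+l_2]$) or $l_1=-1$ or $l_2=n$. A vector $\boldsymbol{\alpha}\in\mathbb{F}^n$ has span $(a,l)$, $0\le l\le n-1$, if its support lies in $[a,a+l]$; $\emptyset$ is a span only of $\mathbf{0}$ and $\mathbb{Z}_n$ of every vector. A minimal span of $\boldsymbol{\alpha}$ is a span $\mathfrak{s}$ of $\boldsymbol{\alpha}$ such that no span $\mathfrak{s}'\lneq\mathfrak{s}$ is a span of $\boldsymbol{\alpha}$. Elementary trellis $\boldsymbol{\alpha}|(a,l)$ ($\boldsymbol{\alpha}$ of span $(a,l)$, $0\le l\le n$): $V_i=\mathbb{F}$ for $i\in(a,a+l]$ (all $i$ if $l=n$), $V_i=0$ otherwise, $E_i=\langle(u_i,\alpha_i,u_{i+1})\rangle$ with $u_i=1$ if $i\in(a,a+l]$, else $0$. The product $T\otimes T'$ has $V_i=V_i(T)\times V_i(T')$ and $E_i=\{((v,v'),\alpha+\alpha',(w,w')):(v,\alpha,w)\in E_i(T),(v',\alpha',w')\in E_i(T')\}$; it satisfies $C(T\otimes T')=C(T)+C(T')$. *)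

(* Defs.v *)
From HB Require Import structures.
From mathcomp Require Import all_boot all_order all_algebra all_field.
Set Implicit Arguments. Unset Strict Implicit. Unset Printing Implicit Defensive.
Import GRing.Theory.
Local Open Scope ring_scope.

Section Trellis.
Variables (F : finFieldType) (n : nat).

(* Spans over Z_n (indices 'I_n, successor ordS).
   SEmpty = degenerate span of length -1; SArc a l = (a,l) with 0<=l<=n-1;
   SFull = degenerate span Z_n (length n). *)
Inductive tspan := SEmpty | SArc of 'I_n & 'I_n | SFull.

Definition offset (a i : 'I_n) : nat := ((i + n - a) %% n)%N.

Definition in_closed (s : tspan) (i : 'I_n) : bool :=
  match s with
  | SEmpty => false
  | SArc a l => (offset a i <= l)%N
  | SFull => true
  end.

Definition in_half (s : tspan) (i : 'I_n) : bool :=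
  match s with
  | SEmpty => false
  | SArc a l => (0 < offset a i <= l)%N
  | SFull => true
  end.

Definition span_le (s1 s2 : tspan) : bool :=
  match s1, s2 with
  | SEmpty, _ => true
  | _, SFull => true
  | SArc a1 l1, SArc a2 l2 =>
      [&& (l1 <= l2)%N, (l2 < n.-1)%N & [forall i, in_closed s1 i ==> in_closed s2 i]]
      || ((l2 == n.-1 :> nat) && [forall i, in_half s1 i ==> in_half s2 i])
  | SFull, SArc a2 l2 =>
      (l2 == n.-1 :> nat) && [forall i, in_half s1 i ==> in_half s2 i]
  | _, SEmpty => false
  end.

Definition is_span_of (alpha : 'rV[F]_n) (s : tspan) : Prop :=
  forall i : 'I_n, alpha 0 i != 0 -> in_closed s i.

Definition is_min_span_of (alpha : 'rV[F]_n) (s : tspan) : Prop :=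
  is_span_of alpha s /\
  forall s', span_le s' s -> s' <> s -> ~ is_span_of alpha s'.

(* A trellis of length n whose vertex set V_i is (a copy of) the F-vector space
   F^(tdim i), with edge sets E_i subsets of V_i x F x V_{i+1}. *)
Record trellis := Trellis {
  tdim : 'I_n -> nat;
  tedge : forall i : 'I_n, {set 'rV[F]_(tdim i) * F * 'rV[F]_(tdim (ordS i))}
}.

Definition nverts (T : trellis) (i : 'I_n) : nat := #|{: 'rV[F]_(tdim T i)}|.

Definition is_linear (T : trellis) : Prop :=
  forall i : 'I_n,
    (0, 0, 0) \in tedge T i /\
    forall (c : F) e e', e \in tedge T i -> e' \in tedge T i ->
      (c *: e.1.1 + e'.1.1, c * e.1.2 + e'.1.2, c *: e.2 + e'.2) \in tedge T i.

Definition closed_path (T : trellis) (v : forall i, 'rV[F]_(tdim T i))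
  (c : 'rV[F]_n) : Prop :=
  forall i : 'I_n, (v i, c 0 i, v (ordS i)) \in tedge T i.

Definition code_of (T : trellis) (c : 'rV[F]_n) : Prop :=
  exists v, @closed_path T v c.

Definition is_trim (T : trellis) : Prop :=
  (forall (j : 'I_n) (x : 'rV[F]_(tdim T j)),
      exists v c, @closed_path T v c /\ v j = x) /\
  (forall (j : 'I_n) e, e \in tedge T j ->
      exists v c, @closed_path T v c /\ (v j, c 0 j, v (ordS j)) = e).

Definition represents (T : trellis) (C : {vspace 'rV[F]_n}) : Prop :=
  forall c, c \in C <-> code_of T c.

Definition smaller (T' T : trellis) : Prop :=
  (forall i, (nverts T' i <= nverts T i)%N) /\
  exists i, (nverts T' i < nverts T i)%N.

Definition minimal_linear_trellis (C : {vspace 'rV[F]_n}) (T : trellis) : Prop :=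
  [/\ is_linear T, is_trim T, represents T C &
      forall T', is_linear T' -> is_trim T' -> represents T' C -> ~ smaller T' T].

(* elementary trellis alpha|s : V_i = F if i in (a,a+l], else 0;
   E_i = < (u_i, alpha_i, u_{i+1}) >.  const_mx 1 is (1) in F^1 and 0 in F^0. *)
Definition elem_trellis (alpha : 'rV[F]_n) (s : tspan) : trellis :=
  @Trellis (fun i => if in_half s i then 1%N else 0%N)
    (fun i => [set ((c *: const_mx 1), c * alpha 0 i, (c *: const_mx 1)) | c : F]).

(* product T (x) T' ; V_i(T) x V_i(T') is realized as F^(d_i + d'_i) via row_mx *)
Definition prod_trellis (T T' : trellis) : trellis :=
  @Trellis (fun i => (tdim T i + tdim T' i)%N)
    (fun i => [set (row_mx e.1.1 e'.1.1, e.1.2 + e'.1.2, row_mx e.2 e'.2)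
              | e in tedge T i, e' in tedge T' i]).

Definition unit_trellis : trellis :=
  @Trellis (fun _ => 0%N) (fun i => [set (0, 0, 0)]).

Definition prod_elem (s : seq ('rV[F]_n * tspan)) : trellis :=
  foldr (fun x T => prod_trellis (elem_trellis x.1 x.2) T) unit_trellis s.

End Trellis.

Arguments SEmpty {n}.
Arguments SFull {n}.

(* Main.v *)
Require Import Defs.
From HB Require Import structures.
From mathcomp Require Import all_boot all_order all_algebra all_field.
From mathcomp Require Import zify.
From Stdlib Require Import Classical.
Set Implicit Arguments. Unset Strict Implicit. Unset Printing Implicit Defensive.
Import GRing.Theory.
Local Open Scope ring_scope.

Section Offs.
Variable n : nat.
Implicit Types a i : 'I_n.

Lemma offsetE a i : offset a i = if (a <= i)%N then (i - a)%N else (i + n - a)%N.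
Proof.
rewrite /offset; case: leqP => h.
  have -> : (i + n - a = (i - a) + n)%N by lia.
  rewrite modnDr modn_small //; have := ltn_ord i; lia.
rewrite modn_small //; have := ltn_ord a; lia.
Qed.

Lemma ordSE i : val (ordS i) = if i.+1 == n then 0%N else i.+1.
Proof.
rewrite /= ; case: eqP => [->|h]; first by rewrite modnn.
rewrite modn_small //; have := ltn_ord i; lia.
Qed.

Lemma offset_lt a i : (offset a i < n)%N.
Proof. rewrite offsetE; have := ltn_ord i; have := ltn_ord a; case: (leqP a i); lia. Qed.

Lemma offset_ordS a i : offset a (ordS i) =
  if offset a i == n.-1 then 0%N else (offset a i).+1.
Proof.
rewrite !offsetE ordSE; have := ltn_ord i; have := ltn_ord a.
case: (i.+1 =P n) => h1.
  case: (leqP a 0) => h3; case: (leqP a i) => h2; case: eqP => h4; lia.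
case: (leqP a i.+1) => h3; case: (leqP a i) => h2; case: eqP => h4; lia.
Qed.

Lemma offset_inj a : injective (offset a).
Proof.
move=> i j; rewrite !offsetE => h; apply/val_inj => /=.
move: h; have := ltn_ord i; have := ltn_ord j; have := ltn_ord a.
case: (leqP a i); case: (leqP a j); lia.
Qed.

Lemma offset_self a : offset a a = 0%N.
Proof. by rewrite offsetE leqnn subnn. Qed.

Lemma offset0 a i : offset a i = 0%N -> i = a.
Proof. by rewrite -(offset_self a) => /offset_inj. Qed.

Lemma offset_iter a t : (t < n)%N -> offset a (iter t (@ordS n) a) = t.
Proof.
elim: t => [|t IH] lt; first exact: offset_self.
rewrite iterS offset_ordS IH; last lia.
case: eqP => //; lia.
Qed.

Lemma iter_offset a i : iter (offset a i) (@ordS n) a = i.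
Proof. apply: (@offset_inj a); rewrite offset_iter //; exact: offset_lt. Qed.

End Offs.
Section Shr.
Variable n : nat.
Implicit Types a i : 'I_n.

Lemma offset_Sa a i : offset (ordS a) i =
  if offset a i == 0%N then n.-1 else (offset a i).-1.
Proof.
rewrite !offsetE ordSE; have := ltn_ord i; have := ltn_ord a.
case: (a.+1 =P n) => h1.
  case: (leqP 0 i) => h3; case: (leqP a i) => h2; case: eqP => h4; lia.
case: (leqP a.+1 i) => h3; case: (leqP a i) => h2; case: eqP => h4; lia.
Qed.

Definition predl (l : 'I_n) : 'I_n :=
  Ordinal (leq_ltn_trans (leq_pred l) (ltn_ord l)).

Definition shrink a (l : 'I_n) : tspan n := SArc (ordS a) (predl l).

Lemma in_closed_shrink a (l : 'I_n) i : (0 < l)%N -> in_closed (shrink a l) i ->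
  in_closed (SArc a l) i && (i != a).
Proof.
move=> lp; rewrite /= offset_Sa; case: eqP => h.
  move=> H; have := ltn_ord l; have := offset_lt a i; lia.
move=> H; apply/andP; split; first lia.
by apply/eqP => e; apply: h; rewrite e offset_self.
Qed.

Lemma in_half_shrink a l i : in_half (shrink a l) i -> in_half (SArc a l) i.
Proof.
rewrite /= offset_Sa; case: eqP => h.
  move=> H; have := ltn_ord l; have := offset_lt a i; lia.
lia.
Qed.

Lemma shrink_strict a (l : 'I_n) : (0 < l)%N ->
  in_half (SArc a l) (ordS a) && ~~ in_half (shrink a l) (ordS a).
Proof.
move=> lp; rewrite /= offset_Sa offset_ordS offset_self.
have hn : (1 < n)%N by have := ltn_ord l; lia.
case: eqP => h1; first lia.
case: eqP => h2; lia.
Qed.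

Lemma span_shrink (F : finFieldType) (d : 'rV[F]_n) a l :
  is_span_of d (SArc a l) -> d 0 a = 0 -> is_span_of d (shrink a l).
Proof.
move=> hs ha i /[dup] di /hs /=; rewrite offset_Sa; case: eqP => h.
  by move: di; rewrite (offset0 h) ha eqxx.
lia.
Qed.

Lemma span0_zero (F : finFieldType) (d : 'rV[F]_n) a (l : 'I_n) :
  l = 0%N :> nat -> is_span_of d (SArc a l) -> d 0 a = 0 -> d = 0.
Proof.
move=> l0 hs ha; apply/rowP => j; rewrite mxE.
case: (d 0 j =P 0) => // /eqP /hs /=; rewrite l0 leqn0 => /eqP/offset0 e.
by rewrite e ha.
Qed.

Lemma span_le_shrink a (l : 'I_n) : (0 < l)%N ->
  span_le (shrink a l) (SArc a l) /\ shrink a l <> SArc a l.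
Proof.
move=> lp; split; last first.
  by case => _ /(congr1 val) /=; lia.
rewrite /span_le /shrink /=.
have lt := ltn_ord l.
case: (ltnP l n.-1) => h.
  apply/orP; left; apply/and3P; split; [rewrite /=; lia | by [] |].
  apply/forallP => i; apply/implyP => /(in_closed_shrink (a:=a) lp).
  by case/andP.
apply/orP; right; apply/andP; split; first by apply/eqP; lia.
apply/forallP => i; apply/implyP; exact: (in_half_shrink (a:=a) (l:=l)).
Qed.

End Shr.
Section Multi.
Variables (F : fieldType) (m : nat).

Definition repl (B W : 'M[F]_m) (P S : {set 'I_m}) : 'M[F]_m :=
  \matrix_(i, j) if i \in P then (if i \in S then W i j else (i == j)%:R)
                 else B i j.

Definition setrow (A : 'M[F]_m) (x : 'I_m) (r : 'I_m -> F) : 'M[F]_m :=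
  \matrix_(i, j) if i == x then r j else A i j.

Lemma det_split (A W : 'M[F]_m) (c : F) x :
  row x A = c *: row x 1%:M + row x W ->
  \det A = c * \det (setrow A x (fun j => (x == j)%:R))
           + \det (setrow A x (fun j => W x j)).
Proof.
move=> hx.
rewrite (@determinant_multilinear _ _ A (setrow A x (fun j => (x == j)%:R))
   (setrow A x (fun j => W x j)) x c 1) ?mul1r //.
- rewrite hx scale1r; congr (_ + _); apply/rowP => j; rewrite !mxE ?eqxx //.
all: apply/matrixP => i j; rewrite !mxE eq_sym (negbTE (neq_lift x i)) //.
Qed.

Lemma multi1 N : forall (P : {set 'I_m}) (A B W : 'M[F]_m) (c : 'I_m -> F),
  (#|P| < N)%N ->
  (forall i, i \in P -> row i A = c i *: row i 1%:M + row i W) ->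
  (forall i, i \notin P -> row i A = row i B) ->
  \det A != 0 -> exists S : {set 'I_m}, (S \subset P) && (\det (repl B W P S) != 0).
Proof.
elim: N => // N IH P A B W c hP hin hout hdet.
case: (set_0Vmem P) => [P0|[x xP]].
  exists set0; rewrite sub0set /=.
  suff -> : repl B W P set0 = A by [].
  apply/matrixP => i j; rewrite !mxE P0 inE.
  by have := hout i; rewrite P0 inE => /(_ isT) /rowP /(_ j); rewrite !mxE.
have hP' : (#|P :\ x| < N)%N by move: hP; rewrite (cardsD1 x P) xP; lia.
move: hdet; rewrite (det_split (hin x xP)).
set Ae := setrow A x _; set Aw := setrow A x _.
have hin' : forall A', (forall i, i != x -> row i A' = row i A) ->
   forall i, i \in P :\ x -> row i A' = c i *: row i 1%:M + row i W.
  by move=> A' hA' i; rewrite in_setD1 => /andP[ix iP]; rewrite hA' // hin.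
have [->|nAe] := eqVneq (\det Ae) 0.
  rewrite mulr0 add0r => nAw.
  pose Bw := setrow B x (fun j => W x j).
  have h1 : forall i, i \in P :\ x -> row i Aw = c i *: row i 1%:M + row i W.
    by apply: hin' => i ix; apply/rowP => j; rewrite !mxE (negbTE ix).
  have h2 : forall i, i \notin P :\ x -> row i Aw = row i Bw.
    move=> i; rewrite in_setD1 negb_and negbK => /orP[/eqP->|iP].
      by apply/rowP => j; rewrite !mxE eqxx.
    have ix : i != x by apply: contraNneq iP => ->.
    by apply/rowP => j; rewrite !mxE (negbTE ix); have := hout i iP => /rowP /(_ j); rewrite !mxE.
  have [S /andP[sS dS]] := IH (P :\ x) Aw Bw W c hP' h1 h2 nAw.
  exists (x |: S); rewrite subUset sub1set xP (subset_trans sS) ?subD1set //=.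
  suff <- : repl Bw W (P :\ x) S = repl B W P (x |: S) by [].
  apply/matrixP => i j; rewrite !mxE in_setD1 in_setU1.
  case: (eqVneq i x) => [->|ix] /=; first by rewrite xP.
  by [].
move=> _.
pose Be := setrow B x (fun j => (x == j)%:R).
have h1 : forall i, i \in P :\ x -> row i Ae = c i *: row i 1%:M + row i W.
  by apply: hin' => i ix; apply/rowP => j; rewrite !mxE (negbTE ix).
have h2 : forall i, i \notin P :\ x -> row i Ae = row i Be.
  move=> i; rewrite in_setD1 negb_and negbK => /orP[/eqP->|iP].
    by apply/rowP => j; rewrite !mxE eqxx.
  have ix : i != x by apply: contraNneq iP => ->.
  by apply/rowP => j; rewrite !mxE (negbTE ix); have := hout i iP => /rowP /(_ j); rewrite !mxE.
have [S /andP[sS dS]] := IH (P :\ x) Ae Be W c hP' h1 h2 nAe.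
exists S; rewrite (subset_trans sS) ?subD1set //=.
suff <- : repl Be W (P :\ x) S = repl B W P S by [].
apply/matrixP => i j; rewrite !mxE in_setD1.
case: (eqVneq i x) => [->|ix] /=; last by [].
have -> : (x \in S) = false by apply/negbTE; apply: contraTN sS => xS; apply/subsetPn; exists x => //; rewrite in_setD1 eqxx.
by rewrite xP.
Qed.

Lemma multi2 N : forall (P : {set 'I_m}) (A B W : 'M[F]_m) (c : 'I_m -> F),
  (#|P| < N)%N ->
  (forall i, i \in P -> row i A = c i *: row i 1%:M + row i W) ->
  (forall i, i \notin P -> row i A = row i B) ->
  \det A != (\prod_(i in P) c i) * \det (repl B W P set0) ->
  exists S : {set 'I_m}, [&& S \subset P, S != set0 & \det (repl B W P S) != 0].
Proof.
elim: N => // N IH P A B W c hP hin hout hdet.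
case: (set_0Vmem P) => [P0|[x xP]].
  move: hdet; rewrite P0 big_set0 mul1r.
  suff -> : repl B W set0 set0 = A by rewrite eqxx.
  apply/matrixP => i j; rewrite !mxE inE.
  by have := hout i; rewrite P0 inE => /(_ isT) /rowP /(_ j); rewrite !mxE.
have hP' : (#|P :\ x| < N)%N by move: hP; rewrite (cardsD1 x P) xP; lia.
move: hdet; rewrite (det_split (hin x xP)).
set Ae := setrow A x _; set Aw := setrow A x _.
have hin' : forall A', (forall i, i != x -> row i A' = row i A) ->
   forall i, i \in P :\ x -> row i A' = c i *: row i 1%:M + row i W.
  by move=> A' hA' i; rewrite in_setD1 => /andP[ix iP]; rewrite hA' // hin.
pose Be := setrow B x (fun j => (x == j)%:R).
have hine : forall i, i \in P :\ x -> row i Ae = c i *: row i 1%:M + row i W.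
  by apply: hin' => i ix; apply/rowP => j; rewrite !mxE (negbTE ix).
have houte : forall i, i \notin P :\ x -> row i Ae = row i Be.
  move=> i; rewrite in_setD1 negb_and negbK => /orP[/eqP->|iP].
    by apply/rowP => j; rewrite !mxE eqxx.
  have ix : i != x by apply: contraNneq iP => ->.
  by apply/rowP => j; rewrite !mxE (negbTE ix); have := hout i iP => /rowP /(_ j); rewrite !mxE.
have eqe : forall S : {set 'I_m}, S \subset P :\ x -> repl Be W (P :\ x) S = repl B W P S.
  move=> S sS; apply/matrixP => i j; rewrite !mxE in_setD1.
  case: (eqVneq i x) => [->|ix] /=; last by [].
  have -> : (x \in S) = false by apply/negbTE; apply: contraTN sS => xS; apply/subsetPn; exists x => //; rewrite in_setD1 eqxx.
  by rewrite xP.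
have [nAw|nAw] := eqVneq (\det Aw) 0; last first.
  move=> _; pose Bw := setrow B x (fun j => W x j).
  have h1 : forall i, i \in P :\ x -> row i Aw = c i *: row i 1%:M + row i W.
    by apply: hin' => i ix; apply/rowP => j; rewrite !mxE (negbTE ix).
  have h2 : forall i, i \notin P :\ x -> row i Aw = row i Bw.
    move=> i; rewrite in_setD1 negb_and negbK => /orP[/eqP->|iP].
      by apply/rowP => j; rewrite !mxE eqxx.
    have ix : i != x by apply: contraNneq iP => ->.
    by apply/rowP => j; rewrite !mxE (negbTE ix); have := hout i iP => /rowP /(_ j); rewrite !mxE.
  have [S /andP[sS dS]] := multi1 hP' h1 h2 nAw.
  exists (x |: S); rewrite subUset sub1set xP (subset_trans sS) ?subD1set //=.
  apply/andP; split; first by apply/set0Pn; exists x; rewrite setU11.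
  suff <- : repl Bw W (P :\ x) S = repl B W P (x |: S) by [].
  apply/matrixP => i j; rewrite !mxE in_setD1 in_setU1.
  case: (eqVneq i x) => [->|ix] /=; first by rewrite xP.
  by [].
rewrite nAw addr0 (bigD1 x xP) /= -mulrA -(eqe set0) ?sub0set //.
move=> hne.
have hne' : \det Ae != (\prod_(i in P :\ x) c i) * \det (repl Be W (P :\ x) set0).
  apply: contraNneq hne => ->; apply/eqP; congr (_ * (_ * _)).
  by apply: eq_bigl => i; rewrite in_setD1 andbC.
have [S /and3P[sS nS dS]] := IH (P :\ x) Ae Be W c hP' hine houte hne'.
exists S; rewrite (subset_trans sS) ?subD1set //= nS /= -eqe //.
Qed.

End Multi.
Section Trel.
Variables (F : finFieldType) (n : nat).
Local Notation trellis := (trellis F n).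

Lemma tdim_prod_elem (L : seq ('rV[F]_n * tspan n)) i :
  tdim (prod_elem L) i = (\sum_(x <- L) (in_half x.2 i : nat))%N.
Proof.
elim: L => [|x L IH]; first by rewrite big_nil.
by rewrite big_cons /= IH; case: in_half.
Qed.

Lemma lin_unit : is_linear (unit_trellis F n).
Proof.
move=> i; split; first by rewrite inE.
move=> c e e'; rewrite !inE => /eqP -> /eqP ->.
by rewrite /= !scaler0 mulr0 !addr0.
Qed.

Lemma lin_elem (a : 'rV[F]_n) s : is_linear (elem_trellis a s).
Proof.
move=> i; split.
  by apply/imsetP; exists 0 => //; rewrite !scale0r mul0r.
move=> c e e' /imsetP[x _ ->] /imsetP[y _ ->] /=.
apply/imsetP; exists (c * x + y) => //.
by rewrite !scalerDl !scalerA mulrDl mulrA.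
Qed.

Lemma row_mx_lin m1 m2 (c : F) (a b : 'rV[F]_m1) (a' b' : 'rV[F]_m2) :
  c *: row_mx a a' + row_mx b b' = row_mx (c *: a + b) (c *: a' + b').
Proof. by rewrite scale_row_mx add_row_mx. Qed.

Lemma lin_prod (T T' : trellis) : is_linear T -> is_linear T' ->
  is_linear (prod_trellis T T').
Proof.
move=> hT hT' i; have [z1 c1] := hT i; have [z2 c2] := hT' i; split.
  apply/imset2P; exists (0,0,0) (0,0,0) => //.
  by rewrite /= !row_mx0 addr0.
move=> c e e' /imset2P[e1 e2 h1 h2 ->] /imset2P[e1' e2' h1' h2' ->] /=.
apply/imset2P; exists (c *: e1.1.1 + e1'.1.1, c * e1.1.2 + e1'.1.2, c *: e1.2 + e1'.2)
                      (c *: e2.1.1 + e2'.1.1, c * e2.1.2 + e2'.1.2, c *: e2.2 + e2'.2).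
- exact: c1 h1 h1'.
- exact: c2 h2 h2'.
rewrite /=; congr (_, _, _); try exact: row_mx_lin.
by rewrite mulrDr -!addrA; congr (_ + _); rewrite addrCA.
Qed.

Lemma lin_prod_elem (L : seq ('rV[F]_n * tspan n)) : is_linear (prod_elem L).
Proof.
elim: L => [|x L IH]; first exact: lin_unit.
exact: lin_prod (lin_elem _ _) IH.
Qed.

Lemma rV_le1 m (x : 'rV[F]_m) : (m <= 1)%N -> exists y, x = y *: const_mx 1.
Proof.
case: m x => [|[|m]] x // _.
  by exists 0; rewrite scale0r; apply/rowP => -[].
exists (x 0 0); apply/rowP => j; rewrite !mxE mulr1.
by rewrite (ord1 j).
Qed.

Lemma trim_unit : is_trim (unit_trellis F n).
Proof.
split.
  move=> j x; exists (fun _ => 0), 0; split; last by apply/rowP => -[].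
  by move=> i; rewrite inE mxE.
move=> j e; rewrite inE => /eqP ->; exists (fun _ => 0), 0; split.
  by move=> i; rewrite inE mxE.
by rewrite mxE.
Qed.

Lemma trim_elem (a : 'rV[F]_n) s : is_trim (elem_trellis a s).
Proof.
have path y : @closed_path _ _ (elem_trellis a s) (fun i => y *: const_mx 1) (y *: a).
  by move=> i; apply/imsetP; exists y => //; rewrite mxE.
split.
  move=> j x; have [|y ->] := rV_le1 x; first by rewrite /=; case: in_half.
  by exists (fun i => y *: const_mx 1), (y *: a); split.
move=> j e /imsetP[y _ ->]; exists (fun i => y *: const_mx 1), (y *: a).
by split => //; rewrite mxE.
Qed.

Lemma trim_prod (T T' : trellis) : is_trim T -> is_trim T' ->
  is_trim (prod_trellis T T').
Proof.
move=> [v1 e1] [v2 e2].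
have comb : forall w1 d1 w2 d2, @closed_path _ _ T w1 d1 -> @closed_path _ _ T' w2 d2 ->
  @closed_path _ _ (prod_trellis T T') (fun i => row_mx (w1 i) (w2 i)) (d1 + d2).
  move=> w1 d1 w2 d2 p1 p2 i; apply/imset2P.
  exists (w1 i, d1 0 i, w1 (ordS i)) (w2 i, d2 0 i, w2 (ordS i)).
  - exact: p1.
  - exact: p2.
  by rewrite [(d1 + d2) 0 i]mxE.
split.
  move=> j x.
  have [w1 [d1 [p1 h1]]] := v1 j (lsubmx (x : 'rV_(tdim T j + tdim T' j))).
  have [w2 [d2 [p2 h2]]] := v2 j (rsubmx (x : 'rV_(tdim T j + tdim T' j))).
  exists (fun i => row_mx (w1 i) (w2 i)), (d1 + d2); split; first exact: comb.
  by rewrite h1 h2 hsubmxK.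
move=> j e /imset2P[f1 f2 h1 h2 ->].
have [w1 [d1 [p1 q1]]] := e1 j f1 h1.
have [w2 [d2 [p2 q2]]] := e2 j f2 h2.
exists (fun i => row_mx (w1 i) (w2 i)), (d1 + d2); split; first exact: comb.
by rewrite -q1 -q2 mxE.
Qed.

Lemma trim_prod_elem (L : seq ('rV[F]_n * tspan n)) : is_trim (prod_elem L).
Proof.
elim: L => [|x L IH]; first exact: trim_unit.
exact: trim_prod (trim_elem _ _) IH.
Qed.

End Trel.
Section Code.
Variables (F : finFieldType) (n : nat).
Local Notation trellis := (trellis F n).

Lemma scal_const_inj m (x y : F) : (0 < m)%N ->
  x *: (const_mx 1 : 'rV[F]_m) = y *: const_mx 1 -> x = y.
Proof.
move=> hm /rowP /(_ (Ordinal hm)); rewrite !mxE !mulr1 //.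
Qed.

Lemma const_along (xf : 'I_n -> F) (a0 : 'I_n) (l : nat) : (l < n)%N ->
  (forall j, (0 < offset a0 (ordS j) <= l)%N -> xf j = xf (ordS j)) ->
  forall i, (offset a0 i <= l)%N -> xf i = xf a0.
Proof.
move=> ln hj.
have H : forall t, (t <= l)%N -> xf (iter t (@ordS n) a0) = xf a0.
  elim => [|t IH] // tl.
  have tl' : (t <= l)%N by lia.
  rewrite iterS -hj ?IH //.
  rewrite -iterS offset_iter; lia.
by move=> i il; rewrite -(iter_offset a0 i) H.
Qed.

Lemma code_unit c : code_of (unit_trellis F n) c -> c = 0.
Proof.
move=> [v p]; apply/rowP => i; have := p i; rewrite inE => /eqP [] _ -> _.
by rewrite mxE.
Qed.

Lemma code_unit0 : code_of (unit_trellis F n) 0.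
Proof. by exists (fun _ => 0) => i; rewrite inE mxE. Qed.

Lemma code_elem (a : 'rV[F]_n) s c : is_span_of a s ->
  code_of (elem_trellis a s) c <-> exists x, c = x *: a.
Proof.
move=> hs; split; last first.
  move=> [y ->]; exists (fun i => y *: const_mx 1) => i.
  by apply/imsetP; exists y => //; rewrite mxE.
move=> [v p].
have [xf hx] : exists xf : 'I_n -> F, forall i,
    (v i, c 0 i, v (ordS i)) = (xf i *: const_mx 1, xf i * a 0 i, xf i *: const_mx 1).
  apply: (@fin_all_exists _ (fun _ => F) (fun i x =>
    (v i, c 0 i, v (ordS i)) = (x *: const_mx 1, x * a 0 i, x *: const_mx 1))) => i.
  have /imsetP[x _ ->] := p i; by exists x.
have cons j : in_half s (ordS j) -> xf j = xf (ordS j).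
  move=> hh; have := hx j; have := hx (ordS j); case=> e1 _ _; case=> _ _ e2.
  apply: (@scal_const_inj (tdim (elem_trellis a s) (ordS j))).
    by rewrite /= hh.
  by rewrite -e1 -e2.
have cE i : c 0 i = xf i * a 0 i by have := hx i; case.
clear hx p v; case: s hs cons => [|a0 l|] hs cons.
- exists 0; apply/rowP => i; rewrite cE !mxE mul0r.
  by case: (a 0 i =P 0) => [->|/eqP /hs]; rewrite ?mulr0.
- exists (xf a0); apply/rowP => i; rewrite cE !mxE.
  case: (a 0 i =P 0) => [->|/eqP /hs /= hi]; first by rewrite !mulr0.
  by rewrite (@const_along xf a0 l) // => j /cons.
- have [n0|npos] := posnP n.
    by exists 0; apply/rowP => i; have := ltn_ord i; rewrite {2}n0.
  pose a0 := Ordinal npos.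
  exists (xf a0); apply/rowP => i; rewrite cE !mxE.
  rewrite (@const_along xf a0 n.-1) //; first lia.
    by move=> j _; exact: cons.
  by have := offset_lt a0 i; lia.
Qed.

Lemma code_prod (T T' : trellis) c :
  code_of (prod_trellis T T') c <->
  exists c1 c2, [/\ c = c1 + c2, code_of T c1 & code_of T' c2].
Proof.
split; last first.
  move=> [c1 [c2 [-> [v1 p1] [v2 p2]]]].
  exists (fun i => row_mx (v1 i) (v2 i)) => i; apply/imset2P.
  exists (v1 i, c1 0 i, v1 (ordS i)) (v2 i, c2 0 i, v2 (ordS i)).
  - exact: p1.
  - exact: p2.
  by rewrite [(c1 + c2) 0 i]mxE.
move=> [v p].
have [f hf] : exists f : 'I_n -> F, forall i, exists e1 e2,
   [/\ e1 \in tedge T i, e2 \in tedge T' i,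
       (v i, c 0 i, v (ordS i)) = (row_mx e1.1.1 e2.1.1, e1.1.2 + e2.1.2, row_mx e1.2 e2.2)
     & e1.1.2 = f i].
  apply: (@fin_all_exists _ (fun _ => F) (fun i x => exists e1 e2,
   [/\ e1 \in tedge T i, e2 \in tedge T' i,
       (v i, c 0 i, v (ordS i)) = (row_mx e1.1.1 e2.1.1, e1.1.2 + e2.1.2, row_mx e1.2 e2.2)
     & e1.1.2 = x])) => i.
  have /imset2P[e1 e2 h1 h2 E] := p i.
  by exists e1.1.2, e1, e2.
exists (\row_i f i), (c - \row_i f i); split; first by rewrite addrC subrK.
  exists (fun i => lsubmx (v i : 'rV_(tdim T i + tdim T' i))) => i.
  have [[[x1 y1] z1] [e2 [h1 h2 E fi]]] := hf i.
  case: E => E1 E2 E3.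
  by rewrite mxE -fi /= E1 E3 !row_mxKl.
exists (fun i => rsubmx (v i : 'rV_(tdim T i + tdim T' i))) => i.
have [e1 [[[x2 y2] z2] [h1 h2 E fi]]] := hf i.
case: E => E1 E2 E3.
by rewrite !mxE E2 -fi /= E1 E3 !row_mxKr addrC addKr.
Qed.

Lemma code_prod_elem k (g : 'I_k -> 'rV[F]_n) (t : 'I_k -> tspan n) (s : seq 'I_k) c :
  (forall j, is_span_of (g j) (t j)) ->
  code_of (prod_elem [seq (g j, t j) | j <- s]) c <-> c \in <<[seq g j | j <- s]>>%VS.
Proof.
move=> hs; elim: s c => [|j s IH] c /=.
  rewrite span_nil memv0; split; first by move/code_unit => ->.
  by move/eqP ->; exact: code_unit0.
rewrite span_cons code_prod; split.
  move=> [c1 [c2 [-> /(code_elem _ (hs j)) [x ->] /IH h2]]].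
  by apply: memv_add => //; apply/vlineP; exists x.
move/memv_addP => [y /vlineP [x ->] [z /IH hz ->]].
exists (x *: g j), z; split => //; apply/(code_elem _ (hs j)); by exists x.
Qed.

End Code.
Section Coord.
Variables (F : finFieldType) (n k : nat).

Lemma seqE (g : 'I_k -> 'rV[F]_n) :
  [seq g j | j <- enum 'I_k] = [tuple g j | j < k] :> seq _.
Proof.
apply: (@eq_from_nth _ 0); first by rewrite size_map size_enum_ord.
move=> i; rewrite size_map size_enum_ord => ik.
by rewrite (nth_map (Ordinal ik)) ?size_enum_ord // -[i]/(val (Ordinal ik)) nth_mktuple nth_enum_ord.
Qed.

Definition Gm (X : k.-tuple 'rV[F]_n) (g : 'I_k -> 'rV[F]_n) : 'M[F]_k :=
  \matrix_(i, j) coord X j (g i).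

Lemma Gm_dep X g (mu : 'I_k -> F) :
  \sum_i mu i *: g i = 0 -> (\row_i mu i) *m Gm X g = 0.
Proof.
move=> H; apply/rowP => j; rewrite !mxE.
rewrite [RHS](_ : _ = coord X j (\sum_i mu i *: g i)); last by rewrite H linear0.
rewrite linear_sum; apply: eq_bigr => i _; rewrite linearZ !mxE //.
Qed.

Lemma free_of_det X g : \det (Gm X g) != 0 -> free [seq g j | j <- enum 'I_k].
Proof.
move=> hd; rewrite seqE; apply/freeP => mu H.
have H' : \sum_i mu i *: g i = 0.
  by rewrite -[RHS]H; apply: eq_bigr => i _; rewrite nth_mktuple.
have := Gm_dep X H'.
have hu : Gm X g \in unitmx by rewrite unitmxE unitfE.
move=> /(congr1 (mulmx^~ (invmx (Gm X g)))); rewrite mulmxK // mul0mx.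
by move=> /rowP h i; have := h i; rewrite !mxE.
Qed.

Lemma basis_of_det (C : {vspace 'rV[F]_n}) X g :
  (forall i, g i \in C) -> \dim C = k -> \det (Gm X g) != 0 ->
  basis_of C [seq g j | j <- enum 'I_k].
Proof.
move=> hC hd hdet; rewrite basisEfree (free_of_det hdet) /= size_map size_enum_ord hd leqnn andbT.
by apply/span_subvP => x /mapP [j _ ->].
Qed.

Lemma Gm_id (X : k.-tuple 'rV[F]_n) : free X -> Gm X (fun i => X`_i) = 1%:M.
Proof. by move=> fX; apply/matrixP => i j; rewrite !mxE coord_free. Qed.

End Coord.
Lemma span_lin (F : finFieldType) n (d1 d2 : 'rV[F]_n) (x y : F) s :
  is_span_of d1 s -> is_span_of d2 s -> is_span_of (x *: d1 + y *: d2) s.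
Proof.
move=> h1 h2 i; rewrite !mxE.
case: (d1 0 i =P 0) => [e1|/eqP/h1 //]; case: (d2 0 i =P 0) => [e2|/eqP/h2 //].
by rewrite e1 e2 !mulr0 addr0 eqxx.
Qed.

Definition startof n (d : 'I_n) (s : tspan n) : 'I_n :=
  match s with SArc a _ => a | _ => d end.
Definition lenof n (d : 'I_n) (s : tspan n) : 'I_n :=
  match s with SArc _ l => l | _ => d end.

Lemma tdim_map (F : finFieldType) n k (g : 'I_k -> 'rV[F]_n) (t : 'I_k -> tspan n) i :
  tdim (prod_elem [seq (g j, t j) | j <- enum 'I_k]) i =
  (\sum_(j <- enum 'I_k) (in_half (t j) i : nat))%N.
Proof. by rewrite tdim_prod_elem big_map. Qed.

Unset Implicit Arguments.

Theorem mainTheorem16 (F : finFieldType) (n k : nat) (C : {vspace 'rV[F]_n})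
  (alpha beta : 'I_k -> 'rV[F]_n) (s : 'I_k -> tspan n) :
  (0 < n)%N ->
  \dim C = k ->
  (forall i : 'I_n, exists2 c, c \in C & c 0 i != 0) ->
  (forall j, s j <> SEmpty) ->
  (forall j, is_span_of (alpha j) (s j)) ->
  minimal_linear_trellis C (prod_elem [seq (alpha j, s j) | j <- enum 'I_k]) ->
  (forall j, beta j \in C) ->
  (forall j, is_min_span_of (beta j) (s j)) ->
  basis_of C [seq beta j | j <- enum 'I_k] /\
  minimal_linear_trellis C (prod_elem [seq (beta j, s j) | j <- enum 'I_k]).
Proof.
move=> hn hdim _ hnE hspan [linT trimT repT minT] hbC hbmin.

have Cspan : C = <<[seq alpha j | j <- enum 'I_k]>>%VS.
  apply/vspaceP => c; apply/idP/idP.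
    by move/repT/(code_prod_elem _ _ hspan).
  by move/(code_prod_elem _ _ hspan)/repT.
have basA : basis_of C [seq alpha j | j <- enum 'I_k].
  by rewrite basisEdim -Cspan subvv size_map size_enum_ord hdim leqnn.
have alphaC j : alpha j \in C.
  by rewrite Cspan; apply: memv_span; apply: map_f; rewrite mem_enum.
set X := [tuple alpha j | j < k].
have freeX : free X by rewrite -seqE; case/andP: basA.
have XE (i : 'I_k) : X`_i = alpha i by rewrite nth_mktuple.
have contra : forall (g : 'I_k -> 'rV[F]_n) (t : 'I_k -> tspan n),
    (forall j, is_span_of (g j) (t j)) -> basis_of C [seq g j | j <- enum 'I_k] ->
    (forall j i, in_half (t j) i -> in_half (s j) i) ->
    (exists j0 i0, in_half (s j0) i0 && ~~ in_half (t j0) i0) -> False.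
  move=> g t hs hb hle [j0 [i0 /andP[hs0 ht0]]].
  apply: (minT (prod_elem [seq (g j, t j) | j <- enum 'I_k])).
  - exact: lin_prod_elem.
  - exact: trim_prod_elem.
  - move=> c; rewrite code_prod_elem //; case/andP: hb => /eqP -> _; by [].
  have gt1 := finNzRing_gt1 F.
  have hsum i : (\sum_(j <- enum 'I_k) (in_half (t j) i : nat) <=
                 \sum_(j <- enum 'I_k) (in_half (s j) i : nat))%N.
    apply: leq_sum => j _; move: (hle j i).
    by case: (in_half (t j) i); case: (in_half (s j) i) => //= /(_ isT).
  split.
    move=> i; rewrite /nverts !card_mx !mul1n leq_exp2l // !tdim_map; exact: hsum.
  exists i0; rewrite /nverts !card_mx !mul1n ltn_exp2l // !tdim_map.
  rewrite !(bigD1_seq j0 (mem_enum _ j0) (enum_uniq _)) /= (negbTE ht0) hs0 /=.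
  rewrite add0n add1n ltnS; apply: leq_sum => j _; move: (hle j i0).
  by case: (in_half (t j) i0); case: (in_half (s j) i0) => //= /(_ isT).
pose d0 := Ordinal hn.
pose a j := startof d0 (s j).
pose l j := lenof d0 (s j).
have sArc j : s j = SArc (a j) (l j).
  rewrite /a /l; case E: (s j) => [|a0 l0|] //; first by have := hnE j; rewrite E.
  exfalso; have [hb1 hb2] := hbmin j; rewrite E in hb1 hb2.
  have lmP : (n.-1 < n)%N by lia.
  pose lm : 'I_n := Ordinal lmP.
  apply: (hb2 (SArc d0 lm)) => // i _ /=; have := offset_lt d0 i; lia.
have betaa j : beta j 0 (a j) != 0.
  have [hb1 hb2] := hbmin j; rewrite sArc in hb1 hb2.
  apply/negP => /eqP b0; case: (posnP (l j)) => l0.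
    have bz := span0_zero l0 hb1 b0.
    by apply: (hb2 SEmpty) => // i; rewrite bz mxE eqxx.
  have [le ne] := span_le_shrink (a j) l0.
  by apply: (hb2 _ le ne); apply: span_shrink.
have alphaa j : alpha j 0 (a j) != 0.
  apply/negP => /eqP a0; have hs := hspan j; rewrite sArc in hs.
  case: (posnP (l j)) => l0.
    have az := span0_zero l0 hs a0.
    have : alpha j \in X by rewrite -XE mem_nth // size_tuple.
    by move/(free_not0 freeX); rewrite az eqxx.
  apply: (contra alpha (fun i => if i == j then shrink (a j) (l j) else s i)).
  - move=> i; case: eqP => [->|_]; last exact: hspan.
    exact: span_shrink.
  - exact: basA.
  - move=> i i'; case: eqP => [->|_] //; rewrite sArc; exact: in_half_shrink.
  exists j, (ordS (a j)); rewrite eqxx sArc; exact: shrink_strict.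
have betafree : free [seq beta j | j <- enum 'I_k].
  apply/negPn/negP => nf.
  have [mu [hmu [i0 hi0]]] : exists mu : 'I_k -> F,
      \sum_i mu i *: beta i = 0 /\ exists i, mu i != 0.
    move: nf; rewrite seqE => /freeP nf; apply: NNPP => H; apply: nf => mu hm i.
    apply: NNPP => hi; apply: H; exists mu; split; last by exists i; apply/eqP.
    by rewrite -[RHS]hm; apply: eq_bigr => i' _; rewrite nth_mktuple.
  pose P := [set i | mu i != 0].
  pose c i := mu i * beta i 0 (a i) / alpha i 0 (a i).
  pose del i := mu i *: beta i - c i *: alpha i.
  pose gam i := if i \in P then mu i *: beta i else alpha i.
  have coordA i j : coord X j (alpha i) = (i == j)%:R by rewrite -XE coord_free.
  have hin i : i \in P -> row i (Gm X gam) = c i *: row i 1%:M + row i (Gm X del).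
    move=> iP; apply/rowP => j; rewrite !mxE /gam iP.
    have -> : mu i *: beta i = c i *: alpha i + del i by rewrite /del addrC subrK.
    by rewrite linearD linearZ /= coordA.
  have hout i : i \notin P -> row i (Gm X gam) = row i 1%:M.
    by move=> iP; apply/rowP => j; rewrite !mxE /gam (negbTE iP) coordA.
  have hdet : \det (Gm X gam) != (\prod_(i in P) c i) * \det (repl 1%:M (Gm X del) P set0).
    have -> : repl 1%:M (Gm X del) P set0 = 1%:M.
      by apply/matrixP => i j; rewrite !mxE in_set0; case: ifP.
    rewrite det1 mulr1.
    have -> : \det (Gm X gam) = 0.
      apply/eqP/det0P; exists (\row_i (i \in P)%:R).
        apply/eqP => /rowP /(_ i0); rewrite !mxE inE hi0 /=; apply/eqP; exact: oner_neq0.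
      apply: Gm_dep; rewrite -[RHS]hmu; apply: eq_bigr => i _; rewrite /gam inE.
      case: eqP => [->|_] /=; by rewrite ?scale0r ?scale1r.
    rewrite eq_sym; apply/prodf_neq0 => i; rewrite inE => hi.
    by rewrite /c !mulf_neq0 ?invr_neq0 ?betaa ?alphaa.
  have [S /and3P[sS nS dS]] := multi2 (ltnSn #|P|) hin hout hdet.
  pose g i := if i \in S then del i else alpha i.
  have gS : repl 1%:M (Gm X del) P S = Gm X g.
    apply/matrixP => i j; rewrite !mxE /g; case: ifP => iP.
      by case: ifP => // _; rewrite coordA.
    have -> : (i \in S) = false by apply: contraFF iP; apply: (subsetP sS).
    by rewrite coordA.
  rewrite gS in dS.
  have delC i : del i \in C by rewrite rpredB ?rpredZ.
  have gC i : g i \in C by rewrite /g; case: ifP.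
  have basS := basis_of_det gC hdim dS.
  have [j0 j0S] := set0Pn _ nS.
  have delspan i : is_span_of (del i) (SArc (a i) (l i)).
    rewrite /del -scaleNr; apply: span_lin; rewrite -sArc //; exact: (hbmin i).1.
  have dela i : del i 0 (a i) = 0.
    by rewrite /del !mxE /c divfK ?subrr // alphaa.
  have lpos : (0 < l j0)%N.
    case: (posnP (l j0)) => // l0; exfalso.
    have dz := span0_zero l0 (delspan j0) (dela j0).
    move: dS; apply/negP; rewrite negbK; apply/det0P; exists (delta_mx 0 j0).
      by apply/eqP => /matrixP /(_ 0 j0); rewrite !mxE !eqxx; apply/eqP; exact: oner_neq0.
    by rewrite -rowE; apply/rowP => j; rewrite !mxE /g j0S dz linear0.
  apply: (contra g (fun i => if i \in S then shrink (a i) (l i) else s i)).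
  - move=> i; rewrite /g; case: ifP => _; last exact: hspan.
    exact: span_shrink.
  - exact: basS.
  - move=> i i'; case: ifP => _ //; rewrite sArc; exact: in_half_shrink.
  exists j0, (ordS (a j0)); rewrite j0S sArc; exact: shrink_strict.
have basB : basis_of C [seq beta j | j <- enum 'I_k].
  rewrite basisEfree betafree size_map size_enum_ord hdim leqnn andbT /=.
  by apply/span_subvP => x /mapP [j _ ->].
split => //.
have bspan j : is_span_of (beta j) (s j) := (hbmin j).1.
split.
- exact: lin_prod_elem.
- exact: trim_prod_elem.
- move=> c; rewrite (code_prod_elem _ _ bspan); case/andP: basB => /eqP -> _; by [].
move=> T'' l1 t1 r1 [h1 [i h2]]; apply: (minT T'' l1 t1 r1).
have eqv i' : nverts (prod_elem [seq (beta j, s j) | j <- enum 'I_k]) i' =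
              nverts (prod_elem [seq (alpha j, s j) | j <- enum 'I_k]) i'.
  by rewrite /nverts !card_mx !tdim_map.
split; first by move=> i'; rewrite -eqv.
by exists i; rewrite -eqv.
Qed.
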